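(* Every open subspace of an $L$-selective space is $L$-selective.
   Context: All spaces are assumed $T_1$. For spaces $Y$, $X$, a map $\varphi:Y\to\mathcal P(X)\setminus\{\emptyset\}$ is lower semicontinuous (l.s.c.) if $\{y:\varphi(y)\cap U\neq\emptyset\}$ is open in $Y$ for every open $U\subseteq X$; a selection is a map $f:Y\to X$ with $f(y)\in\varphi(y)$ for all $y$. $X$ is $Y$-selective if every l.s.c. map from $Y$ to the nonempty closed subsets of $X$ has a continuous selection; $L$-selective means $(\omega+1)$-selective, where $\omega+1$ carries the order topology. *)

(* Defs.v *)
From HB Require Import structures.
From mathcomp Require Import all_boot all_order all_algebra.
From mathcomp Require Import all_classical topology subtype_topology separation_axioms.
Set Implicit Arguments. Unset Strict Implicit. Unset Printing Implicit Defensive.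
Import Order.TTheory.
Local Open Scope classical_set_scope.

(* The ordinal omega+1 = {0,1,2,...} \cup {omega}. *)
Inductive omega1 := Fin of nat | Omega.

Definition omega1_to (x : omega1) : option nat :=
  match x with Fin n => Some n | Omega => None end.
Definition omega1_of (o : option nat) : omega1 :=
  match o with Some n => Fin n | None => Omega end.
Lemma omega1_toK : cancel omega1_to omega1_of. Proof. by case. Qed.

HB.instance Definition _ := Countable.copy omega1 (can_type omega1_toK).

Definition omega1_le (x y : omega1) : bool :=
  match x, y with
  | Fin m, Fin n => (m <= n)%N
  | _, Omega => true
  | Omega, Fin _ => false
  end.
Definition omega1_lt (x y : omega1) : bool := (y != x) && omega1_le x y.
Definition omega1_meet (x y : omega1) := if omega1_lt x y then x else y.
Definition omega1_join (x y : omega1) := if omega1_lt x y then y else x.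

Fact omega1_le_anti : antisymmetric omega1_le.
Proof.
by move=> [m|] [n|] //= /andP[a b]; congr Fin; apply/eqP; rewrite eqn_leq a b.
Qed.
Fact omega1_le_trans : transitive omega1_le.
Proof. by move=> [m|] [n|] [p|] //=; apply: leq_trans. Qed.
Fact omega1_le_total : total omega1_le.
Proof. by move=> [m|] [n|] //=; apply: leq_total. Qed.

Fact omega1_disp : Order.disp_t. Proof. exact: Order.Disp tt tt. Qed.

HB.instance Definition _ := Order.isOrder.Build omega1_disp omega1
  (fun _ _ => erefl) (fun _ _ => erefl) (fun _ _ => erefl)
  omega1_le_anti omega1_le_trans omega1_le_total.

Definition L : topologicalType := order_topology omega1.

Definition lsc {Y X : topologicalType} (phi : Y -> set X) : Prop :=
  forall U : set X, open U -> open [set y | phi y `&` U !=set0].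

Definition selective (Y X : topologicalType) : Prop :=
  forall phi : Y -> set X,
    (forall y, closed (phi y) /\ phi y !=set0) -> lsc phi ->
    exists f : Y -> X, continuous f /\ forall y, phi y (f y).

Definition L_selective (X : topologicalType) : Prop := selective L X.

(* Main.v *)
Require Import Defs.
From HB Require Import structures.
From mathcomp Require Import all_boot all_order all_algebra.
From mathcomp Require Import all_classical topology subtype_topology separation_axioms.
Import Order.TTheory.
Local Open Scope classical_set_scope.

Lemma ltF (a b : nat) : ((Fin a : L) < Fin b)%O = (a < b)%N.
Proof.
have E : (Fin b == Fin a :> L) = (b == a) by apply/eqP/eqP => [[]|->].
by rewrite /Order.lt /= ltn_neqAle E eq_sym.
Qed.

Lemma ltF' (a b : nat) : ((Fin a : omega1) < Fin b)%O = (a < b)%N.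
Proof. exact: ltF. Qed.

Lemma ltFO (a : nat) : ((Fin a : L) < Omega)%O.
Proof. by []. Qed.

Lemma L_fin_open n : open [set (Fin n : L)].
Proof.
case: n => [|n].
  rewrite (_ : [set Fin 0] = `]-oo, (Fin 1 : L)[%classic); first exact: lray_open.
  apply/seteqP; split => [y /= -> |]; first by rewrite in_itv /= ltF.
  by move=> [[|m]|] /=; rewrite in_itv /= ?ltF //.
rewrite (_ : [set Fin n.+1] = `](Fin n : L), Fin n.+2[%classic); first exact: itv_open.
apply/seteqP; split => [y /= -> |]; first by rewrite in_itv /= !ltF !ltnS leqnn.
move=> [m|] /=; rewrite in_itv /= ?ltF //.
by move=> /andP[a b]; congr Fin; apply/eqP; rewrite eqn_leq -ltnS b a.
Qed.

Lemma L_nbhs_Omega (A : set L) : nbhs (Omega : L) A ->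
  exists N, forall m, (N <= m)%N -> A (Fin m).
Proof.
rewrite order_nbhs_itv => -[[l r] [oe Oi] sub].
have key : forall m, (Fin m : L) \in Interval l r -> A (Fin m) by move=> m /sub.
clear sub; move: oe Oi key; case: l => [[] [k|]|[]]; case: r => [[] [k'|]|[]] //=;
  rewrite ?in_itv /= => _ //.
  move=> _ key; exists k.+1 => m km; apply: key; by rewrite in_itv /= andbT ltF'.
by move=> _ key; exists 0%N => m _; apply: key; rewrite in_itv.
Qed.

Lemma L_open (A : set L) :
  (A Omega -> exists N, forall m, (N <= m)%N -> A (Fin m)) -> open A.
Proof.
move=> H; rewrite openE => -[n|] An; rewrite /interior nbhsE /=.
  by exists [set Fin n]; [split; [exact: L_fin_open|] | move=> y ->].
have [N HN] := H An.
exists `](Fin N : L), +oo[%classic; first split.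
- exact: rray_open.
- by rewrite /= in_itv.
- move=> [m|] //=; rewrite in_itv /= andbT ltF => Nm.
  by apply: HN; apply: ltnW.
Qed.

Lemma L_cont {T : topologicalType} (f : L -> T) :
  (forall W, nbhs (f Omega) W -> exists N, forall m, (N <= m)%N -> W (f (Fin m))) ->
  continuous f.
Proof.
move=> H [n|] W /= Wf; rewrite /= nbhsE.
  exists [set Fin n]; first by split; [exact: L_fin_open|].
  by move=> y ->; exact: nbhs_singleton.
have [N HN] := H W Wf.
exists `](Fin N : L), +oo[%classic; first split.
- exact: rray_open.
- by rewrite /= in_itv.
- move=> [m|] //=; rewrite ?in_itv /= ?andbT ?ltF => Nm.
    by apply: HN; apply: ltnW.
  exact: nbhs_singleton.
Qed.

Lemma L_cont_tail {T : topologicalType} (f : L -> T) W :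
  continuous f -> nbhs (f Omega) W -> exists N, forall m, (N <= m)%N -> W (f (Fin m)).
Proof. by move=> cf /cf /L_nbhs_Omega. Qed.

Section Sub.
Context {X : topologicalType} (U : set X).

Lemma sub_open (V : set X) : open V -> @open (set_type U) (set_val @^-1` V).
Proof. by move=> oV; exists V. Qed.

Lemma sub_nbhs (y : set_type U) (W : set (set_type U)) : nbhs y W ->
  exists V : set X, [/\ open V, V (set_val y) & forall z : set_type U, V (set_val z) -> W z].
Proof.
rewrite nbhsE => -[B [oB By] BW].
move: oB By BW; rewrite /open /= => -[V oV <-] Vy VW.
by exists V; split.
Qed.

Lemma sub_nbhsV (y : set_type U) (V : set X) : open V -> V (set_val y) ->
  nbhs y (set_val @^-1` V).
Proof. by move=> oV Vy; apply: open_nbhs_nbhs; split => //; exact: sub_open. Qed.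
End Sub.

Theorem mainTheorem11 (X : topologicalType) (U : set X) :
  accessible_space X -> L_selective X -> open U -> L_selective (set_type U).
Proof.
move=> T1 Xsel oU phi phiP phil.
have [x0 Hx0] := (phiP Omega).2.
pose psi : L -> set X := fun y => match y with
  | Omega => [set set_val x0]
  | Fin n => closure (set_val @` phi (Fin n)) end.
have psiP : forall y, closed (psi y) /\ psi y !=set0.
  case=> [n|] /=; last by split; [exact: accessible_closed_set1| exists (set_val x0)].
  split; first exact: closed_closure.
  have [z Hz] := (phiP (Fin n)).2.
  by exists (set_val z); apply: subset_closure; exists z.
have psil : lsc psi.
  move=> V oV; apply: L_open => -[v [/= -> Vx0]].
  have : open [set y | phi y `&` (set_val @^-1` V) !=set0] by apply: phil; exact: sub_open.
  move=> oS; have : nbhs (Omega : L) [set y | phi y `&` (set_val @^-1` V) !=set0].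
    by apply: open_nbhs_nbhs; split => //; exists x0.
  move=> /L_nbhs_Omega [N HN]; exists N => m /HN [z [pz Vz]].
  by exists (set_val z); split => //; apply: subset_closure; exists z.
have [g [cg gpsi]] := Xsel psi psiP psil.
have gO : g Omega = set_val x0 by exact: (gpsi Omega).
have Ux0 : U (set_val x0) by apply/set_mem; exact: (valP x0).
have [N0 HN0] : exists N, forall m, (N <= m)%N -> U (g (Fin m)).
  by apply: (@L_cont_tail _ _ U) => //; rewrite gO; apply: open_nbhs_nbhs.
have key : forall m (Hm : U (g (Fin m))),
    phi (Fin m) (exist _ (g (Fin m)) (mem_set Hm) : set_type U).
  move=> m Hm; apply: (proj1 (phiP (Fin m))) => B /sub_nbhs [V [oV Vg VB]].
  have /(gpsi (Fin m)) : nbhs (g (Fin m)) V by apply: open_nbhs_nbhs.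
  move=> [_ [[w pw <-] Vw]]; exists w; split => //; exact: VB.
have : forall y, exists z : set_type U, phi y z /\ (y = Omega -> z = x0) /\
    (forall m, y = Fin m -> (N0 <= m)%N -> set_val z = g (Fin m)).
  case=> [m|]; last by exists x0; split => //; split.
  have [Nm|mN] := leqP N0 m.
    exists (exist _ (g (Fin m)) (mem_set (HN0 _ Nm))); split; first exact: key.
    by split => // m' [<-].
  have [z Hz] := (phiP (Fin m)).2; exists z; split => //; split => // m' [<-].
  by rewrite leqNgt mN.
move=> /choice [f Hf]; exists f; split; last by move=> y; exact: (Hf y).1.
apply: L_cont => W; rewrite ((Hf Omega).2.1 erefl) => /sub_nbhs [V [oV Vx0 VW]].
have [N1 HN1] : exists N, forall m, (N <= m)%N -> V (g (Fin m)).
  by apply: (@L_cont_tail _ _ V) => //; rewrite gO; apply: open_nbhs_nbhs.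
exists (maxn N0 N1) => m; rewrite geq_max => /andP[m0 m1]; apply: VW.
by rewrite ((Hf (Fin m)).2.2 m erefl m0); exact: HN1.
Qed.
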